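(* Let $T$ be a tree on at least three vertices and $S \subseteq V(T)$. For a leaf $\ell \in S$, say that $S$ satisfies condition (II) for $\ell$ if every edge $\{a,b\}$ of $T$ with $a$ closer to $\ell$ than $b$ satisfies: (i) if $a,b\notin S$ then $N(b)\cap S=\emptyset$; (ii) if $a\notin S$, $b\in S$ then $|N(b)\cap S|\le 1$; (iii) if $a\in S$, $b\notin S$ then $|(N(b)\cap S)\setminus\{a\}|=1$; (iv) if $a,b\in S$ then $|(N(b)\cap S)\setminus\{a\}|=0$. If $S$ satisfies condition (II) for some leaf $\ell' \in S$, then $S$ satisfies condition (II) for every other leaf $\ell'' \in S$.
   Context: $N(b)$ is the set of neighbors of $b$; distances are graph distances in $T$; a leaf is a vertex of degree one. *)

(* Defs.v *)
From mathcomp Require Import all_boot.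
Set Implicit Arguments. Unset Strict Implicit. Unset Printing Implicit Defensive.

Section Tree.
Variables (T : finType) (e : rel T).

Definition simple_graph := symmetric e /\ irreflexive e.
Definition acyclic := forall c : seq T, uniq c -> 2 < size c -> ~~ cycle e c.
Definition connected := forall x y : T, connect e x y.
Definition is_tree := [/\ simple_graph, connected & acyclic].

Definition walkb (x y : T) (n : nat) : bool :=
  [exists p : n.-tuple T, path e x p && (last x p == y)].
(* graph distance: least n with a walk of length n (all distances in a
   connected graph on |T| vertices are < |T|) *)
Definition dist (x y : T) : nat := find (walkb x y) (iota 0 #|T|).

Definition nbhd (b : T) : {set T} := [set x | e b x].
Definition leaf (v : T) : bool := #|nbhd v| == 1.

Definition condII (S : {set T}) (l : T) : Prop :=
  forall a b : T, e a b -> dist l a < dist l b ->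
    [/\ (a \notin S -> b \notin S -> nbhd b :&: S = set0),
        (a \notin S -> b \in S -> #|nbhd b :&: S| <= 1),
        (a \in S -> b \notin S -> #|(nbhd b :&: S) :\ a| = 1)
      & (a \in S -> b \in S -> #|(nbhd b :&: S) :\ a| = 0)].
End Tree.

(* Main.v *)
Require Import Defs.
From mathcomp Require Import all_boot.
Set Implicit Arguments. Unset Strict Implicit. Unset Printing Implicit Defensive.

Section Aux.
Variables (T : finType) (e : rel T).
Hypotheses (sym : symmetric e) (irr : irreflexive e)
  (conn : connected e) (acyc : acyclic e).

Lemma walkbP x y n :
  reflect (exists p : seq T, [/\ size p = n, path e x p & last x p = y])
          (walkb e x y n).
Proof.
apply: (iffP existsP) => [[p /andP[hp /eqP hl]]|[p [hs hp hl]]].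
  by exists (val p); rewrite size_tuple.
subst n; exists (in_tuple p); by rewrite /= hp hl eqxx.
Qed.

Lemma dist_le x y n : walkb e x y n -> n < #|T| -> dist e x y <= n.
Proof.
move=> hw hn; rewrite /dist; case: leqP => // hlt.
have := before_find 0 hlt; by rewrite nth_iota // add0n hw.
Qed.

Lemma walk_exists x y : exists2 n, n < #|T| & walkb e x y n.
Proof.
have /connectP[p hp hl] := conn x y.
case/shortenP: hp hl => p' hp' hu _ hl.
exists (size p'); last by apply/walkbP; exists p'.
have := max_card (mem (x :: p')); by move/card_uniqP: hu => ->.
Qed.

Lemma dist_walk x y : walkb e x y (dist e x y) /\ dist e x y < #|T|.
Proof.
have [n hn hw] := walk_exists x y.
have hh : has (walkb e x y) (iota 0 #|T|).
  by apply/hasP; exists n => //; rewrite mem_iota.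
split.
  have := nth_find 0 hh; rewrite nth_iota //.
  by have := hh; rewrite has_find size_iota.
by have := hh; rewrite has_find size_iota.
Qed.

Lemma dist0 x y : dist e x y = 0 -> x = y.
Proof.
move=> h; have [hw _] := dist_walk x y; move: hw; rewrite h.
by case/walkbP => p [hs _ hl]; case: p hs hl => // _ <-.
Qed.

Lemma parent l x : x != l -> exists2 y, e y x & dist e l y < dist e l x.
Proof.
move=> hxl; have [/walkbP[p [hs hp hl]] hlt] := dist_walk l x.
move: hs hp hl; case/lastP: p => [|q z].
  by move=> _ _ hl; rewrite -hl eqxx in hxl.
rewrite size_rcons rcons_path last_rcons => hs /andP[hq hz] hzx; subst z.
exists (last l q) => //.
rewrite -hs ltnS; apply: dist_le; first by apply/walkbP; exists q.
by apply: ltn_trans hlt; rewrite -hs.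
Qed.

Definition er x := [rel u v | [&& e u v, u != x & v != x]].

Lemma er_sym x : connect_sym (er x).
Proof.
apply: sym_connect_sym => u v /=; rewrite sym; by case: (u != x); case: (v != x); rewrite /= ?andbT ?andbF.
Qed.

Lemma down l x w : dist e l w < dist e l x -> connect (er x) l w.
Proof.
have: forall n w, dist e l w <= n -> dist e l w < dist e l x -> connect (er x) l w;
  last by move=> H h; apply: (H _ _ (leqnn _) h).
elim=> [|n IH] {}w hn hw.
  by move: hn; rewrite leqn0 => /eqP/dist0 ->.
case: (eqVneq w l) => [->|hwl]; first exact: connect0.
have [y hyw hy] := parent hwl.
have hy' : dist e l y < dist e l x by exact: ltn_trans hy hw.
apply: (connect_trans (IH y _ hy') (connect1 _)).
  by rewrite -ltnS (leq_trans hy).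
rewrite /= hyw /=; apply/andP; split; apply/eqP => hx; subst x.
  by rewrite ltnn in hy'.
by rewrite ltnn in hw.
Qed.

Lemma path_er x p q : path (er x) p q -> all (fun z => z != x) q.
Proof.
elim: q p => //= z s IH u /andP[/and3P[_ _ hz] hp]; by rewrite hz (IH z hp).
Qed.

Lemma cycL x p1 p2 : e x p1 -> e x p2 -> p1 != p2 -> connect (er x) p1 p2 -> False.
Proof.
move=> h1 h2 hne /connectP[p hp hl].
case/shortenP: hp hl => p' hp' hu _ hl; subst p2.
have hall := path_er hp'.
have hpx : p1 != x by apply/eqP => hx; subst p1; rewrite irr in h1.
have := acyc (c := x :: p1 :: p').
have -> : uniq (x :: p1 :: p').
  rewrite /= -/(uniq (p1 :: p')) hu andbT inE negb_or eq_sym hpx /=.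
  by apply/negP => hin; move/allP: hall => /(_ x hin); rewrite eqxx.
have -> : 2 < size (x :: p1 :: p').
  by rewrite /= !ltnS lt0n size_eq0; apply: contraNneq hne => ->.
rewrite /cycle /= h1 rcons_path.
have -> : path e p1 p' by apply: sub_path hp' => u v /and3P[].
by rewrite sym h2 => /(_ isT isT).
Qed.

Lemma dist_self l : dist e l l = 0.
Proof.
apply/eqP; rewrite -leqn0; apply: dist_le; first by apply/walkbP; exists [::].
have [_ h] := dist_walk l l; exact: leq_ltn_trans h.
Qed.

Lemma dist_neq l u v : e u v -> dist e l u != dist e l v.
Proof.
move=> huv; apply/negP => /eqP hd.
case: (eqVneq u l) => [hul|hul].
  subst u; rewrite dist_self in hd.
  have hv := dist0 (esym hd); subst v; by rewrite irr in huv.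
have [pu hpu hpud] := parent hul.
case: (eqVneq v l) => [hvl|hvl].
  by subst v; rewrite hd dist_self in hpud.
have [pv hpv hpvd] := parent hvl.
apply: (@cycL u pu v) => //; first by rewrite sym.
  by apply/eqP => h; subst pu; rewrite hd ltnn in hpud.
apply: connect_trans (_ : connect (er u) pu l) _.
  by rewrite er_sym; apply: down.
apply: connect_trans (_ : connect (er u) l pv) (connect1 _).
  by apply: down; rewrite hd.
rewrite /= hpv /=; apply/andP; split.
  by apply/eqP => h; subst pv; rewrite hd ltnn in hpvd.
by apply/eqP => h; subst v; rewrite irr in huv.
Qed.

Lemma parent_uniq l x p1 p2 : e p1 x -> e p2 x ->
  dist e l p1 < dist e l x -> dist e l p2 < dist e l x -> p1 = p2.
Proof.
move=> h1 h2 d1 d2; apply/eqP/negPn/negP => hne.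
apply: (@cycL x p1 p2) => //; try by rewrite sym.
apply: connect_trans (_ : connect (er x) p1 l) _; last exact: down.
by rewrite er_sym; apply: down.
Qed.

End Aux.

Theorem mainTheorem10 (T : finType) (e : rel T) (S : {set T}) (l' l'' : T) :
  is_tree e -> 3 <= #|T| ->
  l' \in S -> leaf e l' -> l'' \in S -> leaf e l'' -> l'' != l' ->
  condII e S l' -> condII e S l''.
Proof.
move=> [[sym irr] conn acyc] _ l'S leaf' l''S _ _ H.
have chain : forall n x y, dist e l'' x <= n -> e x y ->
    dist e l'' x < dist e l'' y -> dist e l' y < dist e l' x ->
    x \notin S -> y \notin S -> False.
  elim=> [|n IH] x y hn hxy h1 h2 hx hy.
    move: hn; rewrite leqn0 => /eqP/(dist0 conn) hx'; subst x.
    by rewrite l''S in hx.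
  case: (eqVneq x l'') => [hxl|hxl]; first by subst x; rewrite l''S in hx.
  have [x1 hx1 hd1] := parent conn hxl.
  apply: (IH x1 x) => //.
  - by rewrite -ltnS (leq_trans hd1).
  - have hxx1 : e x x1 by rewrite sym.
    have hyx : e y x by rewrite sym.
    have := dist_neq sym irr conn acyc l' hxx1.
    rewrite neq_ltn => /orP[] // hlt.
    have heq := parent_uniq sym irr conn acyc hx1 hyx hlt h2; subst x1.
    by rewrite ltnNge (ltnW h1) in hd1.
  - have hyx : e y x by rewrite sym.
    have [h1' _ _ _] := H y x hyx h2.
    have := h1' hy hx => h0; apply/negP => hx1S.
    have : x1 \in nbhd e x :&: S by rewrite inE hx1S in_set sym hx1.
    by rewrite h0 inE.
have factA : forall b, b \in S -> #|nbhd e b :&: S| <= 1.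
  move=> b hb; case: (eqVneq b l') => [->|hbl].
    apply: leq_trans (subset_leq_card (subsetIl _ _)) _.
    by move/eqP: leaf' => ->.
  have [p hpb hlt] := parent conn hbl.
  have [_ h2 _ h4] := H p b hpb hlt.
  case: (boolP (p \in S)) => hp; last exact: h2.
  by rewrite (cardsD1 p) (h4 hp hb) addn0; case: (p \in _).
move=> a b hab hlt.
have := dist_neq sym irr conn acyc l' hab; rewrite neq_ltn => /orP[lt'|lt'].
  exact: H.
have hba : e b a by rewrite sym.
split=> ha hb.
- exfalso; exact: (chain _ a b (leqnn _) hab hlt lt' ha hb).
- exact: factA.
- have hbl : b != l' by apply/eqP => h; subst b; rewrite l'S in hb.
  have [p hpb hpd] := parent conn hbl.
  have [h1 _ h3 _] := H p b hpb hpd.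
  have haA : a \in nbhd e b :&: S by rewrite inE ha in_set hba.
  case: (boolP (p \in S)) => hpS.
    have hpA : p \in nbhd e b :&: S by rewrite inE hpS in_set sym hpb.
    have hpa : p != a.
      by apply/eqP => h; subst p; rewrite ltnNge (ltnW lt') in hpd.
    have := cardsD1 p (nbhd e b :&: S); rewrite hpA (h3 hpS hb).
    by rewrite (cardsD1 a) haA => -[].
  by rewrite (h1 hpS hb) inE in haA.
- have haA : a \in nbhd e b :&: S by rewrite inE ha in_set hba.
  have := factA b hb; rewrite (cardsD1 a) haA.
  by case: #|_ :\ a|.
Qed.
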